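(* Let $\Lambda$ be a lattice and let $B\subset\Lambda$ be a finite subset. Let $B=B_1\cup B_2$ be an integral decomposition of $B$, and let $D\subseteq B$ be an irreducible subset. Then $D\subseteq B_1$ or $D\subseteq B_2$.
   Context: A lattice is a free abelian group of finite rank. For a subset $A\subseteq\Lambda$, $\langle A\rangle_{\mathbb Z}$ denotes the subgroup generated by $A$ and $\langle A\rangle_{\mathbb C}$ the complex subspace of $\Lambda\otimes_{\mathbb Z}\mathbb C$ it spans. The completion of a subgroup $\Delta\subseteq\Lambda$ is $\overline{\Delta}=\langle\Delta\rangle_{\mathbb C}\cap\Lambda$. An integral decomposition of a finite set $B\subset\Lambda$ is a partition $B=\bigcup_i B_i$ such that $\overline{\langle B\rangle_{\mathbb Z}}=\bigoplus_i\overline{\langle B_i\rangle_{\mathbb Z}}$ (internal direct sum). $B$ is irreducible if it has no nontrivial integral decomposition. *)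

(* Defs.v *)
From HB Require Import structures.
From mathcomp Require Import all_boot all_order all_algebra all_field.
From mathcomp Require Import finmap.
Set Implicit Arguments. Unset Strict Implicit. Unset Printing Implicit Defensive.
Import Order.TTheory GRing.Theory Num.Theory.
Local Open Scope ring_scope.
Local Open Scope fset_scope.

(* The lattice Lambda is modelled as Z^n = 'rV[int]_n (every lattice is
   isomorphic to some Z^n, and all notions below are transported by
   isomorphisms).  Lambda (x) C is modelled as 'rV[algC]_n. *)

Definition toC n (x : 'rV[int]_n) : 'rV[algC]_n := map_mx (fun z : int => z%:~R) x.

(* matrix whose rows are the images in Lambda (x) C of the elements of A;
   its row space is <A>_C *)
Definition cspan_mx n (A : {fset 'rV[int]_n}) : 'M[algC]_(size (enum_fset A), n) :=
  \matrix_(i < size (enum_fset A)) toC (nth 0 (enum_fset A) i).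

(* completion of <A>_Z : elements of Lambda lying in <<A>_Z>_C = <A>_C *)
Definition completion n (A : {fset 'rV[int]_n}) : pred 'rV[int]_n :=
  fun x => (toC x <= cspan_mx A)%MS.

(* Bs is a partition of B, indexed by the finite type I (blocks may be empty) *)
Definition is_partition n (I : finType) (B : {fset 'rV[int]_n})
    (Bs : I -> {fset 'rV[int]_n}) : Prop :=
  (forall x, x \in B <-> exists i, x \in Bs i) /\
  (forall i j, i != j -> Bs i `&` Bs j = fset0).

Definition internal_direct_sum n (I : finType) (B : {fset 'rV[int]_n})
    (Bs : I -> {fset 'rV[int]_n}) : Prop :=
  (forall x, completion B x <->
     exists y : I -> 'rV[int]_n,
       (forall i, completion (Bs i) (y i)) /\ x = \sum_i y i) /\
  (forall y : I -> 'rV[int]_n,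
     (forall i, completion (Bs i) (y i)) -> \sum_i y i = 0 -> forall i, y i = 0).

Definition integral_decomposition n (I : finType) (B : {fset 'rV[int]_n})
    (Bs : I -> {fset 'rV[int]_n}) : Prop :=
  is_partition B Bs /\ internal_direct_sum B Bs.

(* irreducible: every integral decomposition is trivial, i.e. one block
   contains all of B (so all other blocks are empty) *)
Definition irreducible_set n (B : {fset 'rV[int]_n}) : Prop :=
  forall (k : nat) (Bs : 'I_k -> {fset 'rV[int]_n}),
    integral_decomposition B Bs -> exists i, B `<=` Bs i.

(* Main.v *)
Require Import Defs.
From mathcomp Require Import all_boot all_order all_algebra all_field.
From mathcomp Require Import finmap.
From mathcomp Require Import ring.
Import GRing.Theory Num.Theory.
Set Implicit Arguments. Unset Strict Implicit. Unset Printing Implicit Defensive.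
Local Open Scope ring_scope.

Definition toQ n (x : 'rV[int]_n) : 'rV[rat]_n := map_mx (fun z : int => z%:~R) x.
Definition spanQ n (A : {fset 'rV[int]_n}) : 'M[rat]_(size (enum_fset A), n) :=
  \matrix_(i < size (enum_fset A)) toQ (nth 0 (enum_fset A) i).

Lemma toC_Q n (x : 'rV[int]_n) : toC x = map_mx ratr (toQ x).
Proof. by apply/matrixP=> i j; rewrite !mxE ratr_int. Qed.

Lemma cspan_Q n (A : {fset 'rV[int]_n}) : cspan_mx A = map_mx ratr (spanQ A).
Proof. by apply/matrixP=> i j; rewrite !mxE ratr_int. Qed.

Lemma completionQ n (A : {fset 'rV[int]_n}) x :
  completion A x = (toQ x <= spanQ A)%MS.
Proof. by rewrite /completion toC_Q cspan_Q map_submx. Qed.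

Lemma span_mem n (A : {fset 'rV[int]_n}) a : a \in A -> (toQ a <= spanQ A)%MS.
Proof.
move=> aA.
have hi : (index a (enum_fset A) < size (enum_fset A))%N by rewrite index_mem.
have -> : toQ a = row (Ordinal hi) (spanQ A).
  by rewrite rowK /= nth_index.
exact: row_sub.
Qed.

Lemma span_le n (A : {fset 'rV[int]_n}) m (S : 'M[rat]_(m, n)) :
  (forall a, a \in A -> (toQ a <= S)%MS) -> (spanQ A <= S)%MS.
Proof.
move=> H; apply/row_subP=> i; rewrite rowK; apply: H.
by apply: mem_nth.
Qed.

Lemma span_mono n (A A' : {fset 'rV[int]_n}) : (A `<=` A')%fset -> (spanQ A <= spanQ A')%MS.
Proof.
move=> /fsubsetP sub; apply: span_le => a aA; exact/span_mem/sub.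
Qed.

Lemma toQD n (x y : 'rV[int]_n) : toQ (x + y) = toQ x + toQ y.
Proof. by apply/matrixP=> i j; rewrite !mxE rmorphD. Qed.
Lemma toQN n (x : 'rV[int]_n) : toQ (- x) = - toQ x.
Proof. by apply/matrixP=> i j; rewrite !mxE rmorphN. Qed.
Lemma toQ0 n : toQ (0 : 'rV[int]_n) = 0.
Proof. by apply/matrixP=> i j; rewrite !mxE. Qed.
Lemma toQ_inj n (x y : 'rV[int]_n) : toQ x = toQ y -> x = y.
Proof.
move=> /matrixP H; apply/matrixP=> i j; have := H i j; rewrite !mxE.
by move/intr_inj.
Qed.

Lemma clear_den n (v : 'rV[rat]_n) :
  exists m : rat, m != 0 /\ exists z : 'rV[int]_n, m *: v = toQ z.
Proof.
exists ((\prod_(j < n) denq (v 0 j))%:~R); split.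
  by rewrite intr_eq0 prodf_seq_neq0; apply/allP=> j _; rewrite denq_neq0.
exists (\row_j (numq (v 0 j) * \prod_(k < n | k != j) denq (v 0 k))).
apply/matrixP=> i j; rewrite !mxE (bigD1 j) //= (ord1 i).
rewrite rmorphM /=.
set q := v 0 j.
have E : (denq q)%:~R * q = (numq q)%:~R :> rat.
  have hd := denq_neq0 q; rewrite -(intr_eq0 rat) in hd.
  by rewrite -{2}(divq_num_den q); field.
by rewrite intrM -E; ring.
Qed.

Lemma comp_mono n (A A' : {fset 'rV[int]_n}) x :
  (A `<=` A')%fset -> completion A x -> completion A' x.
Proof. rewrite !completionQ => /span_mono h1 h2; exact: submx_trans h2 h1. Qed.

Lemma comp_add n (A : {fset 'rV[int]_n}) x y :
  completion A x -> completion A y -> completion A (x + y).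
Proof. rewrite !completionQ toQD; exact: addmx_sub. Qed.

Lemma subN n m (v : 'rV[rat]_n) (S : 'M[rat]_(m, n)) : (v <= S)%MS -> (- v <= S)%MS.
Proof. by move=> h; rewrite -scaleN1r; apply: scalemx_sub. Qed.

Lemma comp_opp n (A : {fset 'rV[int]_n}) x :
  completion A x -> completion A (- x).
Proof. rewrite !completionQ toQN; exact: subN. Qed.

Definition i1 : 'I_2 := @Ordinal 2 1 isT.

Lemma sum2 (V : zmodType) (f : 'I_2 -> V) : \sum_i f i = f ord0 + f i1.
Proof. by rewrite !big_ord_recr big_ord0 /= add0r; congr (f _ + f _); apply: val_inj. Qed.

Lemma ord2_cases (i : 'I_2) : i = ord0 \/ i = i1.
Proof. by case: i => [[|[|k]] h]; [left|right|]; try apply: val_inj. Qed.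

Lemma swap4 (V : zmodType) (a b c d : V) : a + b = c + d -> a - c = d - b.
Proof. by move=> h; apply: (canRL (addrK b)); rewrite addrAC h addrC addKr. Qed.

Local Open Scope fset_scope.

Theorem lemma3p3 (n : nat) (B B1 B2 D : {fset 'rV[int]_n}) :
  integral_decomposition B (fun b : bool => if b then B1 else B2) ->
  D `<=` B -> irreducible_set D ->
  D `<=` B1 \/ D `<=` B2.
Proof.
move=> [[Bpart Bdisj] [Bsum Buniq]] DB irrD.
set Ds := fun i : 'I_2 => if val i == 0%N then D `&` B1 else D `&` B2.
have Ds0 : Ds ord0 = D `&` B1 by [].
have Ds1 : Ds i1 = D `&` B2 by [].
have inB : forall x, x \in D -> x \in B1 \/ x \in B2.
  move=> x xD; have xB : x \in B by apply: (fsubsetP DB).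
  by case: (Bpart x) => /(_ xB) [[] xi] _; [left|right].
have [i Hi] : exists i, D `<=` Ds i.
  apply: irrD; split; [split|split].
  - move=> x; split.
    + move=> xD; case: (inB x xD) => xi.
      * by exists ord0; rewrite Ds0 in_fsetI xD xi.
      * by exists i1; rewrite Ds1 in_fsetI xD xi.
    + by move=> [i]; rewrite /Ds; case: ifP => _; rewrite in_fsetI => /andP[].
  - have key : (D `&` B1) `&` (D `&` B2) = fset0.
      apply/eqP; rewrite -fsubset0 -(Bdisj true false) //.
      by apply: fsetISS; apply: fsubsetIr.
    move=> i j ij; case: (ord2_cases i) => Ei; case: (ord2_cases j) => Ej;
      subst i j; rewrite ?eqxx // in ij; rewrite ?Ds0 ?Ds1 // fsetIC //.
  - move=> x; split.
    + move=> xD.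
      have hs : (spanQ D <= spanQ (D `&` B1) + spanQ (D `&` B2))%MS.
        apply: span_le => a aD; case: (inB a aD) => ai.
        * apply: submx_trans (addsmxSl _ _); apply: span_mem.
          by rewrite in_fsetI aD ai.
        * apply: submx_trans (addsmxSr _ _); apply: span_mem.
          by rewrite in_fsetI aD ai.
      have := xD; rewrite completionQ => hx.
      have /sub_addsmxP [u Eu] := submx_trans hx hs.
      have [yb [Hyb Exb]] := (proj1 (Bsum x) (comp_mono DB xD)).
      rewrite big_bool /= in Exb.
      set w1 := u.1 *m spanQ (D `&` B1) in Eu.
      set w2 := u.2 *m spanQ (D `&` B2) in Eu.
      have EQ : (toQ (yb true) + toQ (yb false) = w1 + w2)%R by rewrite -toQD -Exb.
      have h1 := Hyb true; have h2 := Hyb false.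
      rewrite /= completionQ in h1; rewrite /= completionQ in h2.
      have vB1 : ((toQ (yb true) - w1)%R <= spanQ B1)%MS.
        apply: addmx_sub => //; apply: subN; apply: submx_trans (submxMl _ _) _.
        by apply: span_mono; apply: fsubsetIr.
      have vB2 : ((toQ (yb true) - w1)%R <= spanQ B2)%MS.
        have -> : (toQ (yb true) - w1 = w2 - toQ (yb false))%R.
          exact: swap4.
        apply: addmx_sub; last exact: subN.
        apply: submx_trans (submxMl _ _) _.
        by apply: span_mono; apply: fsubsetIr.
      have [m [m0 [z Ez]]] := clear_den (toQ (yb true) - w1)%R.
      have z1 : completion B1 z by rewrite completionQ -Ez scalemx_sub.
      have z2 : completion B2 (- z) by rewrite completionQ toQN -Ez -scalerN scalemx_sub // subN.
      have z0 := Buniq (fun b => if b then z else - z)%R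
                  (fun b => if b as b' return completion (if b' then B1 else B2) (if b' then z else - z)%R then z1 else z2).
      have zz : z = 0%R by apply: (z0 _ true); rewrite big_bool /= subrr.
      move: Ez; rewrite zz toQ0 => /eqP; rewrite scaler_eq0 (negbTE m0) /= subr_eq0 => /eqP e1.
      have e2 : toQ (yb false) = w2.
        by move: EQ; rewrite e1 => /addrI.
      exists (fun i : 'I_2 => if val i == 0%N then yb true else yb false); split.
      * move=> i; case: (ord2_cases i) => ->; rewrite /= completionQ ?e1 ?e2; exact: submxMl.
      * by rewrite sum2 /=.
    + move=> [y [Hy ->]]; rewrite sum2; apply: comp_add.
      * by apply: comp_mono (Hy ord0); rewrite Ds0 fsubsetIl.
      * by apply: comp_mono (Hy i1); rewrite Ds1 fsubsetIl.
  - move=> y Hy y0.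
    have H : forall b : bool, completion (if b then B1 else B2) (if b then y ord0 else y i1).
      case=> /=.
      * by apply: comp_mono (Hy ord0); rewrite Ds0 fsubsetIr.
      * by apply: comp_mono (Hy i1); rewrite Ds1 fsubsetIr.
    have := Buniq _ H; rewrite big_bool /= -sum2 => /(_ y0) hb.
    by move=> i; case: (ord2_cases i) => ->; [apply: (hb true)|apply: (hb false)].
move: Hi; rewrite /Ds; case: ifP => _ H; [left|right];
  exact: fsubset_trans H (fsubsetIr _ _).
Qed.
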